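(* A set $S\subseteq S_n$ is symmetric if and only if the set system $A(S)$ is harmonic.
   Context: $\mathrm{Des}(w)=\{i: w(i)>w(i+1)\}$; $F_{n,D}=\sum x_{i_1}\cdots x_{i_n}$ over $i_1\le\cdots\le i_n$ with $i_j<i_{j+1}$ whenever $j\in D$; $S\subseteq S_n$ is symmetric if $Q(S)=\sum_{w\in S}F_{n,\mathrm{Des}(w)}$ is a symmetric function. A set system is $H=(U,(A_1,\dots,A_m))$ with $A_i\subseteq U$ (ordered). For $I\subseteq[m]$, $H_I=\bigcap_{i\in I}A_i$ (equal to $U$ if $I=\emptyset$). The run decomposition of a finite set $I$ of positive integers is the partition given by the sizes, in nonincreasing order, of the maximal runs of consecutive integers in $I$. $H$ is harmonic if $|H_I|=|H_J|$ for all $I,J\subseteq[m]$ with the same run decomposition. For $S\subseteq S_n$, $A(S)=(S,(A_1,\dots,A_{n-1}))$ with $A_i=\{\pi\in S:\pi(i)>\pi(i+1)\}$. *)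

(* Defs.v *)
From mathcomp Require Import all_boot all_fingroup.
Set Implicit Arguments. Unset Strict Implicit. Unset Printing Implicit Defensive.

(* Conventions: positions 1..n of the paper are 0..n-1 here; variables
   x_1, x_2, ... of the paper are indexed by 0, 1, 2, ... here. *)

Definition pval n (w : {perm 'I_n}) (k : nat) : nat :=
  if insub k is Some i then val (w i) else 0.

Definition Des n (w : {perm 'I_n}) : {set 'I_n} :=
  [set i : 'I_n | (i.+1 < n) && (pval w i.+1 < pval w i)].

(* A homogeneous power series in x_0, x_1, ... is represented by its coefficient
   function on monomials; a monomial x_{i_1} ... x_{i_k} is represented by the
   weakly increasing sequence [:: i_1; ...; i_k] of its variable indices. *)
Definition series := seq nat -> nat.

Definition Ffund n (D : {set 'I_n}) : series := fun s =>
  if [&& size s == n, sorted leq s &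
      [forall j : 'I_n, (j \in D) ==> (j.+1 < n) ==> (nth 0 s j < nth 0 s j.+1)]]
  then 1 else 0.

Definition Qfun n (S : {set {perm 'I_n}}) : series := fun s =>
  \sum_(w in S) Ffund (Des w) s.

(* f is symmetric: invariant under every permutation sigma of the variables,
   i.e. the coefficient of the monomial x_{sigma(i_1)}...x_{sigma(i_k)}
   equals that of x_{i_1}...x_{i_k}. *)
Definition symmetric_series (f : series) : Prop :=
  forall sigma : nat -> nat, bijective sigma ->
  forall s : seq nat, sorted leq s -> f (sort leq (map sigma s)) = f s.

Definition symmetric_set n (S : {set {perm 'I_n}}) : Prop :=
  symmetric_series (Qfun S).

Record setsystem (T : finType) (m : nat) := SetSystem {
  ss_U : {set T};
  ss_A : 'I_m -> {set T} }.

Definition ssI (T : finType) m (H : setsystem T m) (I : {set 'I_m}) : {set T} :=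
  if I == set0 then ss_U H else \bigcap_(i in I) ss_A H i.

Definition inI m (I : {set 'I_m}) (k : nat) : bool :=
  if insub k is Some i then i \in I else false.

Definition run_start m (I : {set 'I_m}) (k : nat) : bool :=
  inI I k && ((k == 0) || ~~ inI I k.-1).

Definition run_length m (I : {set 'I_m}) (k : nat) : nat :=
  find (fun l => ~~ inI I (k + l)) (iota 0 m.+1).

Definition run_decomp m (I : {set 'I_m}) : seq nat :=
  sort geq [seq run_length I k | k <- iota 0 m & run_start I k].

Definition harmonic (T : finType) m (H : setsystem T m) : Prop :=
  forall I J : {set 'I_m}, run_decomp I = run_decomp J ->
    #|ssI H I| = #|ssI H J|.

Definition AS n (S : {set {perm 'I_n}}) : setsystem {perm 'I_n} n.-1 :=
  SetSystem S (fun i : 'I_n.-1 => [set p in S | pval p i.+1 < pval p i]).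

(* Main.v *)
Require Import Defs.
From mathcomp Require Import all_boot all_fingroup all_algebra zify.
Set Implicit Arguments. Unset Strict Implicit. Unset Printing Implicit Defensive.
Import GRing.Theory.

Fixpoint avec (b : bitseq) : seq nat :=
  match b with
  | [::] => [:: 0]
  | true :: b' => let v := avec b' in (head 0 v).+1 :: behead v
  | false :: b' => 0 :: avec b'
  end.

Lemma avecE b : avec b = head 0 (avec b) :: behead (avec b).
Proof. by case: b => [|[] b]. Qed.

Lemma avec_cat x y : avec (x ++ false :: y) = avec x ++ avec y.
Proof.
elim: x => [//|[] x IH] /=; rewrite IH //.
by rewrite [avec x]avecE.
Qed.

Lemma sumn_avec b : sumn (avec b) = count id b.
Proof.
elim: b => [//|[] b IH] /=; last by rewrite IH.
by move: IH; rewrite [avec b]avecE /= => <-; rewrite addSn.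
Qed.

Lemma size_avec b : size (avec b) = (count negb b).+1.
Proof.
elim: b => [//|[] b IH] /=; last by rewrite IH.
by rewrite -IH [avec b]avecE.
Qed.

Lemma sumn_size_avec b : sumn (avec b) + size (avec b) = (size b).+1.
Proof. by rewrite sumn_avec size_avec addnS (count_predC id). Qed.

Fixpoint subs (b : bitseq) : seq bitseq :=
  match b with
  | [::] => [:: [::]]
  | x :: b' => let r := subs b' in
      if x then map (cons false) r ++ map (cons true) r else map (cons false) r
  end.

Lemma subs_cat x y : subs (x ++ y) = [seq c ++ d | c <- subs x, d <- subs y].
Proof.
elim: x => [|[] x IH] /=.
  by rewrite cats0 map_id.
  by rewrite allpairs_cat !allpairs_mapl IH !map_allpairs.
by rewrite allpairs_mapl IH map_allpairs.
Qed.

Lemma size_subs b c : c \in subs b -> size c = size b.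
Proof.
elim: b c => [|[] b IH] c /=; first by rewrite inE => /eqP ->.
  by rewrite mem_cat => /orP[] /mapP[d /IH <- ->].
by move=> /mapP[d /IH <- ->].
Qed.

Definition Tb (phi : seq nat -> int) b := (\sum_(c <- subs b) phi (avec c))%R.
Definition inv (phi : seq nat -> int) := forall v v', perm_eq v v' -> phi v = phi v'.
Definition shift (phi : seq nat -> int) c := fun v => phi (avec c ++ v).

Definition bits' (a : seq nat) : bitseq := flatten [seq rcons (nseq x true) false | x <- a].

Lemma bits'_cons x a : bits' (x :: a) = nseq x true ++ false :: bits' a.
Proof. by rewrite /bits' /= cat_rcons. Qed.

Lemma Tb_split phi x y :
  Tb phi (x ++ false :: y) = (\sum_(c <- subs x) Tb (shift phi c) y)%R.
Proof.
rewrite /Tb subs_cat big_allpairs_dep; apply: eq_bigr => c _ /=.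
by rewrite big_map; apply: eq_bigr => d _; rewrite avec_cat.
Qed.

Lemma Tb_cons phi x a :
  Tb phi (bits' (x :: a)) = (\sum_(c <- subs (nseq x true)) Tb (shift phi c) (bits' a))%R.
Proof. by rewrite bits'_cons Tb_split. Qed.

Lemma Tb_ext phi psi b : phi =1 psi -> Tb phi b = Tb psi b.
Proof. by move=> e; apply: eq_bigr => c _; rewrite e. Qed.

Lemma inv_shift phi c : inv phi -> inv (shift phi c).
Proof. by move=> h v v' pv; rewrite /shift; apply: h; rewrite perm_cat2l. Qed.

Lemma Tb_rem t x phi : inv phi -> x \in t ->
  Tb phi (bits' t) = Tb phi (bits' (x :: rem x t)).
Proof.
elim: t phi => [//|y t IH] phi hphi /=.
case: eqP => [->//|nxy]; rewrite inE => /orP[/eqP exy|xt]; first by case: nxy.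
rewrite Tb_cons.
transitivity (\sum_(d <- subs (nseq y true))
   \sum_(c <- subs (nseq x true)) Tb (shift (shift phi d) c) (bits' (rem x t)))%R.
  apply: eq_bigr => d _; rewrite (IH _ (inv_shift d hphi) xt) Tb_cons //.
rewrite Tb_cons exchange_big /=; apply: eq_bigr => c _; rewrite Tb_cons.
apply: eq_bigr => d _; apply: Tb_ext => v; rewrite /shift !catA.
by apply: hphi; rewrite -!catA perm_catCA.
Qed.

Lemma Tb_perm a a' phi : perm_eq a a' -> inv phi -> Tb phi (bits' a) = Tb phi (bits' a').
Proof.
elim: a a' phi => [|x s IH] a' phi pa hphi.
  by case: a' pa => // y a' /perm_size.
have xa : x \in a' by rewrite -(perm_mem pa) inE eqxx.
have ps : perm_eq s (rem x a').
  by rewrite -(perm_cons x); apply: (perm_trans pa); apply: perm_to_rem.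
rewrite (Tb_rem hphi xa) !Tb_cons; apply: eq_bigr => c _.
exact: IH (inv_shift c hphi).
Qed.
Lemma avec_nseq x : avec (nseq x true) = [:: x].
Proof. by elim: x => //= x ->. Qed.

Lemma bits'_avec b : bits' (avec b) = rcons b false.
Proof.
elim: b => [//|[] b IH] /=; last by rewrite /bits' /= -/(bits' _) IH.
move: IH; rewrite [avec b]avecE => IH.
by rewrite bits'_cons /= -bits'_cons IH.
Qed.

Lemma ex_bits w : w != [::] -> exists c, bits' w = rcons c false /\ avec c = w.
Proof.
elim: w => [//|x w IH] _; case: w IH => [|y w] IH.
  by exists (nseq x true); rewrite /bits' /= cats0 avec_nseq.
case: IH => // c [e1 e2]; exists (nseq x true ++ false :: c).
by rewrite bits'_cons e1 rcons_cat /= avec_cat avec_nseq e2.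
Qed.

Definition bitsof w := take (size (bits' w)).-1 (bits' w).

Lemma bitsofP w : w != [::] ->
  avec (bitsof w) = w /\ (size (bitsof w)).+1 = sumn w + size w.
Proof.
case/ex_bits=> c [e1 e2]; rewrite /bitsof e1 size_rcons /= -cats1 take_size_cat //.
by rewrite -e2 sumn_size_avec.
Qed.

Lemma sumn_rem x v : x \in v -> sumn v = x + sumn (rem x v).
Proof. by move=> xv; rewrite (perm_sumn (perm_to_rem xv)). Qed.

Definition Top (F : bitseq -> int) b :=
  (\sum_(c <- subs b) (-1) ^+ (count id c) * F c)%R.

Definition avinv m (F : bitseq -> int) := forall c c', size c = m -> size c' = m ->
  perm_eq (avec c) (avec c') -> F c = F c'.

Lemma guard_rem m v : 0 \in v -> sumn v + size v = m.+2 ->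
  rem 0 v != [::] /\ size (bitsof (rem 0 v)) = m /\ avec (bitsof (rem 0 v)) = rem 0 v.
Proof.
move=> v0 e.
have s1 : sumn (rem 0 v) + size (rem 0 v) = m.+1.
  move: e; rewrite (sumn_rem v0) size_rem // add0n.
  by case: v v0 => //= x v _; rewrite addnS => -[].
have ne : rem 0 v != [::] by case: (rem 0 v) s1.
have [a1 a2] := bitsofP ne.
by split=> //; split=> //; apply/eqP; rewrite -eqSS a2 s1.
Qed.

Lemma T_inv m F : avinv m F -> avinv m (Top F).
Proof.
move=> hF.
pose phi v : int := if (0 \in v) && (sumn v + size v == m.+2)
   then ((-1) ^+ (sumn v) * F (bitsof (rem 0%N v)))%R else 0%R.
have hphi : inv phi.
  move=> v v' pv; rewrite /phi (perm_mem pv) (perm_sumn pv) (perm_size pv).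
  case: ifP => // /andP[v'0 /eqP e'].
  have v0 : 0 \in v by rewrite (perm_mem pv).
  have e : sumn v + size v = m.+2 by rewrite (perm_sumn pv) (perm_size pv).
  have [_ [s1 a1]] := guard_rem v0 e.
  have [_ [s2 a2]] := guard_rem v'0 e'.
  congr (_ * _)%R; apply: hF => //; rewrite a1 a2 -(perm_cons 0).
  rewrite -(permPl (perm_to_rem v0)); apply: (perm_trans pv).
  exact: perm_to_rem.
have key : forall b, size b = m -> Top F b = Tb phi (bits' (avec b)).
  move=> b sb; rewrite bits'_avec -cats1 /Top /Tb subs_cat big_allpairs_dep.
  apply: eq_big_seq => c cb /=; rewrite big_cons big_nil addr0.
  have sc : size c = m by rewrite (size_subs cb).
  have v0 : 0 \in avec c ++ [:: 0] by rewrite mem_cat inE eqxx orbT.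
  have e : sumn (avec c ++ [:: 0]) + size (avec c ++ [:: 0]) = m.+2.
    by have := sumn_size_avec c; rewrite sumn_cat size_cat /= sc; lia.
  rewrite /phi avec_cat /= v0 e eqxx /= sumn_cat /= addn0 sumn_avec; congr (_ * _)%R; first by rewrite addn0.
  have [_ [s1 a1]] := guard_rem v0 e.
  apply: hF => //; rewrite a1 -(perm_cons 0) -(permPr (perm_to_rem v0)).
  by rewrite perm_sym perm_catC.
move=> b b' sb sb' pb; rewrite (key b sb) (key b' sb').
exact: Tb_perm.
Qed.
Fixpoint leF (c : bitseq) (d : nat -> bool) : bool :=
  if c is x :: c' then (x ==> d 0) && leF c' (fun j => d j.+1) else true.
Fixpoint disjF (c : bitseq) (d : nat -> bool) : bool :=
  if c is x :: c' then (x ==> ~~ d 0) && disjF c' (fun j => d j.+1) else true.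

Lemma IE1 b d : @eq int (\sum_(c <- subs b) (-1) ^+ (count id c) * (leF c d)%:R)%R (disjF b d)%:R%R.
Proof.
elim: b d => [|x b IH] d /=; first by rewrite big_cons big_nil expr0 mul1r addr0.
case: x; rewrite ?big_cat !big_map /=.
  rewrite (IH (fun j => d j.+1)).
  case: (d 0) => /=.
    rewrite -[RHS](subrr ((disjF b (fun j => d j.+1))%:R%R)) -(IH (fun j => d j.+1)).
    rewrite -sumrN; congr (_ + _)%R; apply: eq_bigr => c _.
    by rewrite add1n exprS mulN1r mulNr.
  by rewrite big1 ?addr0 // => c _; rewrite mulr0.
by rewrite IH.
Qed.

Lemma IE2 b d : @eq int (\sum_(c <- subs b) (-1) ^+ (count id c) * (disjF c d)%:R)%R (leF b d)%:R%R.
Proof.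
elim: b d => [|x b IH] d /=; first by rewrite big_cons big_nil expr0 mul1r addr0.
case: x; rewrite ?big_cat !big_map /=.
  rewrite (IH (fun j => d j.+1)).
  case: (d 0) => /=.
    by rewrite big1 ?addr0 // => c _; rewrite mulr0.
  rewrite -[RHS](subrr ((leF b (fun j => d j.+1))%:R%R)) -(IH (fun j => d j.+1)).
  rewrite -sumrN; congr (_ + _)%R; apply: eq_bigr => c _.
  by rewrite add1n exprS mulN1r mulNr.
by rewrite IH.
Qed.
Definition desc n (w : {perm 'I_n}) (j : nat) := Defs.pval w j.+1 < Defs.pval w j.
Definition Gz n (S : {set {perm 'I_n}}) b : int := (\sum_(w in S) (disjF b (desc w))%:R)%R.
Definition Hz n (S : {set {perm 'I_n}}) b : int := (\sum_(w in S) (leF b (desc w))%:R)%R.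

Lemma GTop n (S : {set {perm 'I_n}}) b : Gz S b = Top (Hz S) b.
Proof.
rewrite /Top /Hz; under eq_bigr do rewrite mulr_sumr.
rewrite exchange_big /=; apply: eq_bigr => w _; by rewrite IE1.
Qed.

Lemma HTop n (S : {set {perm 'I_n}}) b : Hz S b = Top (Gz S) b.
Proof.
rewrite /Top /Gz; under eq_bigr do rewrite mulr_sumr.
rewrite exchange_big /=; apply: eq_bigr => w _; by rewrite IE2.
Qed.

Lemma leF_all c d : leF c d = all (fun j => nth false c j ==> d j) (iota 0 (size c)).
Proof.
elim: c d => [//|x c IH] d /=; rewrite -add1n iotaDl all_map IH.
by congr (_ && _); apply: eq_all => j /=; rewrite add1n.
Qed.

Lemma disjF_all c d : disjF c d = all (fun j => nth false c j ==> ~~ d j) (iota 0 (size c)).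
Proof.
elim: c d => [//|x c IH] d /=; rewrite -add1n iotaDl all_map IH.
by congr (_ && _); apply: eq_all => j /=; rewrite add1n.
Qed.

Definition bs m (I : {set 'I_m}) : bitseq := mkseq (inI I) m.

Lemma inI_ord m (I : {set 'I_m}) (i : 'I_m) : inI I i = (i \in I).
Proof. by rewrite /inI valK. Qed.

Lemma inI_ge m (I : {set 'I_m}) j : m <= j -> inI I j = false.
Proof. by move=> h; rewrite /inI insubF // ltnNge h. Qed.

Lemma all_bs m (I : {set 'I_m}) (P : nat -> bool) :
  all (fun j => nth false (bs I) j ==> P j) (iota 0 m) = [forall i : 'I_m, (i \in I) ==> P i].
Proof.
apply/allP/forallP => H.
  move=> i; have := H i; rewrite mem_iota add0n ltn_ord nth_mkseq ?inI_ord //.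
  by move=> /(_ isT).
move=> j; rewrite mem_iota add0n => /= hj; rewrite nth_mkseq //.
by have := H (Ordinal hj); rewrite -inI_ord.
Qed.

Lemma ssI_AS n (S : {set {perm 'I_n}}) (I : {set 'I_n.-1}) :
  ssI (AS S) I = [set w in S | leF (bs I) (desc w)].
Proof.
apply/setP => w; rewrite inE leF_all size_mkseq all_bs /ssI.
case: ifP => [/eqP ->|nI] /=.
  by case: (w \in S) => //=; apply/esym/forallP => i; rewrite in_set0.
apply/bigcapP/andP => [H|[wS /forallP H] i iI].
  have [i0 i0I] := set0Pn _ (negbT nI).
  have := H i0 i0I; rewrite inE => /andP[wS _]; split=> //.
  apply/forallP => i; apply/implyP => iI.
  by have := H i iI; rewrite inE => /andP[].
by rewrite inE wS; exact: (implyP (H i) iI).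
Qed.

Lemma card_Hz n (S : {set {perm 'I_n}}) (I : {set 'I_n.-1}) :
  (#|ssI (AS S) I|)%:R%R = Hz S (bs I).
Proof.
rewrite ssI_AS /Hz -sum1_card natr_sum big_mkcond [RHS]big_mkcond /=.
by apply: eq_bigr => w _; rewrite inE; case: (w \in S); case: leF.
Qed.
Definition ps (s : seq nat) : bitseq :=
  if s is x :: t then pairmap (fun a b => a == b) x t else [::].

Lemma size_ps s : size (ps s) = (size s).-1.
Proof. by case: s => //= x t; rewrite size_pairmap. Qed.

Lemma nth_ps s j : j < (size s).-1 -> nth false (ps s) j = (nth 0 s j == nth 0 s j.+1).
Proof. by case: s => //= x t hj; rewrite (nth_pairmap 0). Qed.

Lemma Qfun_G n (S : {set {perm 'I_n}}) s : sorted leq s -> size s = n ->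
  (Qfun S s)%:R%R = Gz S (ps s).
Proof.
move=> hs ss; rewrite /Qfun /Gz natr_sum; apply: eq_bigr => w _; congr (_%:R)%R.
rewrite /Ffund ss eqxx hs /= disjF_all size_ps ss.
set X := [forall _, _]; set Y := all _ _.
suff -> : X = Y by case: Y.
apply/forallP/allP => H.
  move=> j; rewrite mem_iota add0n => /= hj; rewrite nth_ps ?ss //.
  apply/implyP => /eqP e; apply/negP => dj.
  have jn : j < n by lia.
  have j1 : j.+1 < n by lia.
  have := H (Ordinal jn); rewrite inE /= j1 /=; move: dj; rewrite /desc => -> /=.
  by rewrite e ltnn.
move=> j; apply/implyP; rewrite inE => /andP[j1 dj]; apply/implyP => _.
have hj : j < n.-1 by lia.
have := H j; rewrite mem_iota add0n hj => /(_ isT); rewrite nth_ps ?ss // => /implyP Hj.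
rewrite ltn_neqAle; apply/andP; split.
  by apply/negP => e; move: (Hj e); rewrite /desc dj.
apply: (sorted_leq_nth leq_trans leqnn 0 hs); rewrite ?inE ?ss //; lia.
Qed.
Definition rs' (prev : bool) (p : nat -> bool) k := p k && ~~ (if k is j.+1 then p j else prev).
Definition rlN N (p : nat -> bool) k := find (fun l => ~~ p (k + l)) (iota 0 N).
Definition pos := fun x : nat => 0 < x.

Lemma hd_avec b : head 0 (avec b) = find negb b.
Proof. by elim: b => [//|[] b IH] //=; rewrite IH. Qed.

Lemma mkseqS (p : nat -> bool) m : mkseq p m.+1 = p 0 :: mkseq (fun k => p k.+1) m.
Proof. by rewrite /mkseq /= (iotaDl 1 0) -map_comp. Qed.

Lemma rlN0 N p : rlN N p 0 = find negb (mkseq p N).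
Proof. by rewrite /rlN /mkseq find_map; apply: eq_find => l; rewrite add0n. Qed.

Lemma find_pad (p : nat -> bool) m N : (forall k, m <= k -> p k = false) -> m < N ->
  find negb (mkseq p N) = find negb (mkseq p m).
Proof.
move=> hp hN; rewrite -(subnKC (ltnW hN)) /mkseq iotaD map_cat find_cat.
case: ifP => // /negbT hn; rewrite (hasNfind hn) size_map size_iota.
case e: (N - m) => [|k]; first by move: hN e; lia.
by rewrite /= add0n hp // addn0.
Qed.

Lemma runs_gen N m : forall p prev, (forall k, m <= k -> p k = false) -> m < N ->
  [seq rlN N p k | k <- iota 0 m & rs' prev p k] =
  filter pos (if prev then behead (avec (mkseq p m)) else avec (mkseq p m)).
Proof.
elim: m => [|m IH] p prev hp hN; first by case: prev.
set p' := fun k => p k.+1.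
have hp' : forall k, m <= k -> p' k = false by move=> k hk; apply: hp.
have hN' : m < N by lia.
have E : [seq rlN N p k | k <- iota 1 m & rs' prev p k] =
         [seq rlN N p' k | k <- iota 0 m & rs' (p 0) p' k].
  rewrite (iotaDl 1 0) filter_map -map_comp.
  have -> : filter (preim (addn 1) (rs' prev p)) (iota 0 m) = filter (rs' (p 0) p') (iota 0 m).
    by apply: eq_filter => -[|k].
  apply: eq_map => k /=; rewrite /rlN; apply: eq_find => l; by rewrite /p' add1n addSn.
have L : [seq rlN N p k | k <- iota 0 m.+1 & rs' prev p k] =
   (if rs' prev p 0 then [:: rlN N p 0] else [::]) ++ [seq rlN N p' k | k <- iota 0 m & rs' (p 0) p' k].
  by rewrite /= -E; case: ifP.
rewrite L (IH p' (p 0) hp' hN') mkseqS -/p'; clear E L.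
case h0: (p 0); rewrite /rs' h0 /=; last by case: prev.
case: prev => //=; congr (_ :: _).
by rewrite rlN0 (find_pad hp hN) mkseqS h0 /= hd_avec.
Qed.

Lemma run_decompE m (I : {set 'I_m}) : run_decomp I = sort geq (filter pos (avec (bs I))).
Proof.
rewrite /run_decomp -(@runs_gen m.+1 m (inI I) false) //; last exact: inI_ge.
congr (sort _ _); congr (map _ _).
by apply: eq_filter => -[|k]; rewrite /run_start /rs' //= orbF.
Qed.
Lemma dec_pos (v : seq nat) : perm_eq v (filter pos v ++ nseq (size v - size (filter pos v)) 0).
Proof.
rewrite -(perm_filterC pos v) perm_cat2l.
have -> : filter (predC pos) v = nseq (size (filter (predC pos) v)) 0.
  apply/all_pred1P; rewrite all_filter; apply/allP => x _ /=.
  by rewrite /pos; case: x.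
rewrite !size_filter -(count_predC pos v) addKn.
by [].
Qed.

Lemma sumn_pos (v : seq nat) : sumn v = sumn (filter pos v).
Proof.
by rewrite (perm_sumn (dec_pos v)) sumn_cat sumn_nseq ?muln0 ?mul0n addn0.
Qed.

Lemma perm_pos (u u' : seq nat) : perm_eq (filter pos u) (filter pos u') ->
  sumn u + size u = sumn u' + size u' -> perm_eq u u'.
Proof.
move=> pf e.
have es : size u = size u'.
  by move: e; rewrite sumn_pos (sumn_pos u') (perm_sumn pf) => /addnI.
apply: (perm_trans (dec_pos u)); rewrite perm_sym; apply: (perm_trans (dec_pos u')).
by rewrite es (perm_size pf) perm_cat2r perm_sym.
Qed.

Lemma rd_perm m (I J : {set 'I_m}) :
  (run_decomp I = run_decomp J) <-> perm_eq (avec (bs I)) (avec (bs J)).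
Proof.
have tot : total geq by move=> x y; apply: leq_total.
have tr : transitive geq by move=> y x z h1 h2; apply: leq_trans h2 h1.
have an : antisymmetric geq by move=> x y h; apply: anti_leq; rewrite andbC.
rewrite !run_decompE; split.
  move/(perm_sortP tot tr an) => pf; apply: perm_pos pf _.
  by rewrite !sumn_size_avec /bs !size_mkseq.
by move=> p; apply/(perm_sortP tot tr an); apply: perm_filter.
Qed.
Lemma perm_count_mem (s1 s2 : seq nat) :
  (forall x, count_mem x s1 = count_mem x s2) -> perm_eq s1 s2.
Proof. by move=> h; apply/allP => x _ /=; rewrite h. Qed.

Lemma sorted_head_eq x y t : sorted leq (x :: y :: t) -> x \in y :: t -> x = y.
Proof.
move=> /= /andP[xy hp]; rewrite inE => /orP[/eqP //|xt].
have := order_path_min leq_trans hp => /allP /(_ x xt) yx.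
by apply: anti_leq; rewrite xy yx.
Qed.

Lemma undup_head x t : sorted leq (x :: t) -> undup (x :: t) = x :: behead (undup (x :: t)).
Proof.
elim: t x => [//|y t IH] x hs.
have -> : undup [:: x, y & t] = if x \in y :: t then undup (y :: t) else x :: undup (y :: t) by [].
case: ifP => // xin.
have exy := sorted_head_eq hs xin; subst y.
by rewrite IH //; exact: path_sorted hs.
Qed.

Definition mults (s : seq nat) := [seq (count_mem v s).-1 | v <- undup s].

Lemma avec_ps s : sorted leq s -> s != [::] -> avec (ps s) = mults s.
Proof.
elim: s => [//|x t IH] hs _; case: t IH hs => [|y t] IH hs.
  by rewrite /mults /= eqxx.
have hs' : sorted leq (y :: t) := path_sorted hs.
have -> : ps [:: x, y & t] = (x == y) :: ps (y :: t) by [].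
case: (eqVneq x y) => [exy|nxy].
  subst y; rewrite /= IH // /mults.
  have U := undup_head hs'.
  have -> : undup [:: x, x & t] = undup (x :: t) by rewrite [LHS]/undup -/undup mem_head.
  rewrite U /=.
  congr (_ :: _); first by rewrite eqxx.
  have := undup_uniq (x :: t); rewrite U /= => /andP[xr _].
  apply/eq_in_map => v vr /=.
  by have -> : (x == v) = false by apply/eqP => exv; subst v; rewrite vr in xr.
rewrite /= IH // /mults.
have xn : x \notin y :: t by apply/negP => /(sorted_head_eq hs) /eqP; rewrite (negbTE nxy).
have -> : undup [:: x, y & t] = x :: undup (y :: t) by rewrite [LHS]/undup -/undup (negbTE xn).
rewrite /=.
congr (_ :: _); first by move/count_memPn: xn => /= ->; rewrite eqxx.
apply/eq_in_map => v vin0; have vin : v \in y :: t by rewrite -mem_undup; exact: vin0.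
rewrite /=.
by have -> : (x == v) = false by apply/eqP => exv; subst v; rewrite vin in xn.
Qed.
Fixpoint sb0 (x : nat) (b : bitseq) : seq nat :=
  if b is c :: b' then x :: sb0 (x + ~~ c) b' else [:: x].

Lemma sb0E x b : sb0 x b = x :: behead (sb0 x b).
Proof. by case: b. Qed.

Lemma size_sb0 x b : size (sb0 x b) = (size b).+1.
Proof. by elim: b x => //= c b IH x; rewrite IH. Qed.

Lemma sb0_ge x b v : v \in sb0 x b -> x <= v.
Proof.
elim: b x => [|c b IH] x /=; first by rewrite inE => /eqP ->.
rewrite inE => /orP[/eqP -> //|/IH]; apply: leq_trans; exact: leq_addr.
Qed.

Lemma sorted_sb0 x b : sorted leq (sb0 x b).
Proof.
elim: b x => [//|c b IH] x /=.
by have := IH (x + ~~ c); rewrite [sb0 (x + ~~ c) b]sb0E /= => ->; rewrite andbT leq_addr.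
Qed.

Lemma ps_sb0 x b : ps (sb0 x b) = b.
Proof.
elim: b x => [//|c b IH] x /=.
move: (IH (x + ~~ c)); rewrite [sb0 (x + ~~ c) b]sb0E /= => ->; congr (_ :: _).
by case: c; rewrite /= ?addn0 ?eqxx // -{1}(addn0 x) eqn_add2l.
Qed.

Lemma undup_sb0 x b : undup (sb0 x b) = iota x (count negb b).+1.
Proof.
elim: b x => [//|c b IH] x /=.
case: c => /=.
  have xin : x \in sb0 x b by rewrite sb0E mem_head.
  by rewrite addn0 xin IH.
have -> : (x \in sb0 (x + 1) b) = false.
  by apply/negP => /sb0_ge; rewrite addn1 ltnn.
by rewrite IH addn1.
Qed.

Lemma count_sb0 b i : count_mem i (sb0 0 b) =
  if i < size (avec b) then (nth 0 (avec b) i).+1 else 0.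
Proof.
have E : avec b = [seq (count_mem v (sb0 0 b)).-1 | v <- iota 0 (count negb b).+1].
  have ne : sb0 0 b != [::] by rewrite sb0E.
  by rewrite -{1}(ps_sb0 0 b) avec_ps ?sorted_sb0 // /mults undup_sb0.
have sz := size_avec b.
case: ifP => hi.
  have hi' : i < (count negb b).+1 by rewrite -sz.
  rewrite E (nth_map 0) ?size_iota // nth_iota // add0n prednK //.
  rewrite lt0n; apply/negP => /eqP /count_memPn.
  by rewrite -mem_undup undup_sb0 mem_iota add0n hi'.
apply/count_memPn; by rewrite -mem_undup undup_sb0 mem_iota add0n -sz hi.
Qed.
Lemma bs_setof m (c : bitseq) : size c = m -> bs [set i : 'I_m | nth false c i] = c.
Proof.
move=> sc; rewrite /bs -[RHS](mkseq_nth false) sc /mkseq.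
apply/eq_in_map => k; rewrite mem_iota add0n /= => hk.
by rewrite -[k]/(nat_of_ord (Ordinal hk)) inI_ord inE.
Qed.

Lemma sym_G n (S : {set {perm 'I_n}}) : symmetric_set S -> avinv n.-1 (Gz S).
Proof.
move=> hsym c c' sc sc' pc.
case: n S hsym sc sc' => [|m] S hsym sc sc'.
  by case: c sc pc => // _; case: c' sc'.
have pc' : perm_eq (avec c') (avec c) by rewrite perm_sym.
case/(perm_iotaP 0): pc' => Is pIs ea'.
have szIs : size Is = size (avec c) by rewrite (perm_size pIs) size_iota.
have uIs : uniq Is by rewrite (perm_uniq pIs) iota_uniq.
have memIs : forall i, (i \in Is) = (i < size (avec c)).
  by move=> i; rewrite (perm_mem pIs) mem_iota.
have ka : size (avec c') = size (avec c) by rewrite ea' size_map.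
pose sg i := if i < size (avec c) then index i Is else i.
pose tau j := nth j Is j.
have c1 : cancel sg tau.
  move=> i; rewrite /sg /tau; case: ifP => hi; first by rewrite nth_index // memIs.
  by rewrite nth_default // szIs leqNgt hi.
have c2 : cancel tau sg.
  move=> j; rewrite /sg /tau; case: (ltnP j (size (avec c))) => hj.
    have : nth j Is j \in Is by rewrite mem_nth // szIs.
    by rewrite memIs => ->; rewrite index_uniq // szIs.
  by rewrite nth_default ?szIs // ltnNge hj.
have bij : bijective sg by exists tau.
have key : sort leq (map sg (sb0 0 c)) = sb0 0 c'.
  rewrite -[RHS](sorted_sort leq_trans (sorted_sb0 0 c')).
  apply/(perm_sortP leq_total leq_trans anti_leq).
  apply: perm_count_mem => j.
  rewrite count_map (@eq_count _ (preim sg (pred1 j)) (pred1 (tau j))); last first.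
    by move=> x; apply/eqP/eqP => [<-|->]; [exact: (esym (c1 x)) | exact: c2].
  rewrite !count_sb0 ka.
  case: (ltnP j (size (avec c))) => hj.
    have ht : tau j < size (avec c) by rewrite -memIs mem_nth // szIs.
    by rewrite ht ea' (nth_map j) ?szIs.
  rewrite /tau nth_default ?szIs //.
  by rewrite ltnNge hj.
rewrite -(ps_sb0 0 c) -(ps_sb0 0 c') -!Qfun_G ?sorted_sb0 ?size_sb0 ?sc ?sc' //.
by rewrite -key (hsym sg bij _ (sorted_sb0 0 c)).
Qed.

Lemma mults_sort s (sg : nat -> nat) : injective sg ->
  perm_eq (mults (sort leq (map sg s))) (mults s).
Proof.
move=> inj; set s2 := sort leq (map sg s).
have p2 : perm_eq s2 (map sg s) by rewrite /s2 (perm_sort leq).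
have E : [seq (count_mem v s2).-1 | v <- map sg (undup s)] = [seq (count_mem v s).-1 | v <- undup s].
  rewrite -map_comp; apply: eq_map => u /=; rewrite (seq.permP p2) count_map.
  by congr (_.-1); apply: eq_count => x /=; rewrite inj_eq.
rewrite /mults -E; apply: perm_map; rewrite -undup_map_inj //.
apply: perm_undup; exact: perm_mem p2.
Qed.

Lemma harm_G n (S : {set {perm 'I_n}}) : harmonic (AS S) -> avinv n.-1 (Gz S).
Proof.
move=> hh.
have hH : avinv n.-1 (Hz S).
  move=> c c' sc sc' pc.
  have ec := bs_setof sc; have ec' := bs_setof sc'.
  rewrite -ec -ec' -!card_Hz; congr (_%:R)%R; apply: hh; apply/rd_perm.
  by rewrite ec ec'.
move=> c c' sc sc' pc; rewrite !GTop; exact: T_inv hH c c' sc sc' pc.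
Qed.

Theorem proposition3p14 (n : nat) (S : {set {perm 'I_n}}) :
  symmetric_set S <-> harmonic (AS S).
Proof.
split.
  move=> hsym I J /rd_perm pIJ.
  have hG := sym_G hsym.
  have hH : avinv n.-1 (Hz S).
    by move=> c c' sc sc' pc; rewrite !HTop; exact: T_inv hG c c' sc sc' pc.
  apply/eqP; rewrite -(@Num.Theory.eqr_nat int) !card_Hz.
  by rewrite (hH _ _ _ _ pIJ) ?size_mkseq.
move=> hh sg bsg s hs.
have inj := bij_inj bsg.
case e : (size s == n); last first.
  by rewrite /Qfun !big1 // => w _; rewrite /Ffund ?size_sort ?size_map e.
move/eqP: e => e.
case: s hs e => [|x t] hs e; first by [].
set s2 := sort leq (map sg (x :: t)).
have hs2 : sorted leq s2 by apply: sort_sorted; exact: leq_total.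
have e2 : size s2 = n by rewrite size_sort size_map.
have ne2 : s2 != [::] by rewrite -size_eq0 e2 -e.
apply/eqP; rewrite -(@Num.Theory.eqr_nat int) !Qfun_G //; apply/eqP.
apply: (harm_G hh); rewrite ?size_ps ?e2 ?e //.
rewrite !avec_ps //; exact: mults_sort inj.
Qed.
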